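(* Under condition $\mathcal D'_{q_n}$, for every $\tau>0$, $$\lim_{n\to\infty}k_n\mathbb P(\mathscr W^c_{r_n}(U_n(\tau)))=\theta\tau\qquad\text{and}\qquad\lim_{n\to\infty}\frac{\mathbb P(\mathscr W^c_{r_n}(U_n(\tau)))}{r_n\mathbb P(U_n(\tau))}=\theta.$$
   Context: $\mathbf X_0,\mathbf X_1,\dots$ stationary in $\mathbb R^d$, coordinate process with shift $\sigma$. Thresholds $u_n$ nonincreasing, left-continuous, $\lim_{\tau_1\to0,\tau_2\to\infty}\mathbb P(u_n(\tau_2)<\|\mathbf X_0\|<u_n(\tau_1))=1$, $n\mathbb P(\|\mathbf X_0\|>u_n(\tau))\to\tau$; $u_n^{-1}(z)=\sup\{\tau>0:z\le u_n(\tau)\}$. Sequences $k_n,t_n\to\infty$, $r_n=\lfloor n/k_n\rfloor\to\infty$, $k_nt_n=o(n)$, $q_n=o(r_n)$. $U_n(\tau)=\{\|\mathbf X_0\|>u_n(\tau)\}$, $U_n^{(q_n)}(\tau)=U_n(\tau)\cap\bigcap_{i=1}^{q_n}\{\|\mathbf X_i\|\le u_n(\tau)\}$; $\mathscr W^c_{r}(U_n(\tau))=\bigcup_{i=0}^{r-1}\sigma^{-i}(U_n(\tau))=\{\max_{0\le i<r}\|\mathbf X_i\|>u_n(\tau)\}$. Standing assumption (extremal index): $\theta=\lim_n\mathbb P(U_n^{(q_n)}(\tau))/\mathbb P(U_n(\tau))$ exists for all $\tau>0$. Condition $\mathcal D'_{q_n}$: for every set $A_1=\{(x_j):x_j\in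 H_j,\ j=0,\dots,m\}$ ($H_j$ Borel), with $A_{n,1}=\{(u_n^{-1}(\|\mathbf X_j\|)\mathbf X_j/\|\mathbf X_j\|)_{j\ge0}\in A_1\}$, $A^{(q)}=A\cap\bigcap_{i=1}^q\sigma^{-i}(A^c)$, $\mathscr W^c_{[a,b)}(A)=\bigcup_{a\le i<b}\sigma^{-i}(A)$: $\lim_nn\mathbb P(A^{(q_n)}_{n,1}\cap\mathscr W^c_{[q_n+1,r_n)}(A_{n,1}))=0$. *)

(* Defs.v *)
From HB Require Import structures.
From mathcomp Require Import all_boot all_order all_algebra.
From mathcomp Require Import all_classical all_reals all_analysis.
Set Implicit Arguments. Unset Strict Implicit. Unset Printing Implicit Defensive.
Import Order.TTheory GRing.Theory Num.Theory.
Import numFieldNormedType.Exports.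
Local Open Scope classical_set_scope.
Local Open Scope ring_scope.

Section Defs.
Variable R : realType.
Variable dim : nat.
Local Notation V := 'rV[R]_dim.
Local Notation Seq := (nat -> V).

Definition borelV : set (set V) := <<s [set A : set V | open A] >>.

Definition seq_sigma : set (set Seq) :=
  <<s [set C | exists (j : nat) (A : set V), borelV A /\ C = [set x : Seq | A (x j)]] >>.

Definition shiftinv (i : nat) (B : set Seq) : set Seq :=
  [set x | B (fun j => x (i + j)%N)].

Definition Wc (a b : nat) (B : set Seq) : set Seq :=
  [set x | exists i, (a <= i < b)%N /\ shiftinv i B x].

Definition qrun (q : nat) (B : set Seq) : set Seq :=
  B `&` [set x | forall i, (1 <= i <= q)%N -> ~ shiftinv i B x].

Definition Un (u : nat -> R -> R) (n : nat) (tau : R) : set Seq :=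
  [set x | u n tau < `|x 0%N|].

Definition uinv (u : nat -> R -> R) (n : nat) (z : R) : R :=
  sup [set tau | 0 < tau /\ z <= u n tau].

(* A_{n,1} for A_1 = {(x_j) : x_j \in H_j, j = 0..m} *)
Definition An1 (u : nat -> R -> R) (n m : nat) (H : nat -> set V) : set Seq :=
  [set x | forall j, (j <= m)%N ->
     H j (uinv u n `|x j| *: (`|x j|^-1 *: x j))].

Definition ev (T : Type) (X : nat -> T -> V) (B : set Seq) : set T :=
  [set w | B (fun j => X j w)].

End Defs.

Definition pr {d0 : measure_display} {T : measurableType d0} {R : realType}
  (P : probability T R) (A : set T) : R := fine (P A).

(* Main.v *)
Require Import Defs.
From HB Require Import structures.
From mathcomp Require Import all_boot all_order all_algebra.
From mathcomp Require Import all_classical all_reals all_analysis.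
From mathcomp Require Import zify ring lra.
Import Order.TTheory GRing.Theory Num.Theory.
Import numFieldNormedType.Exports.
Local Open Scope classical_set_scope.
Local Open Scope ring_scope.

Section Sig.
Variable (T : Type) (G : set (set T)).
Let S := <<s G >>.
Lemma sig_gen A : G A -> S A.
Proof. exact: sub_sigma_algebra. Qed.
Lemma sig0 : S set0.
Proof. by case: (smallest_sigma_algebra setT G). Qed.
Lemma sigC A : S A -> S (~` A).
Proof. case: (smallest_sigma_algebra setT G) => _ h _ /h. by rewrite setTD. Qed.
Lemma sigU (F : (set T)^nat) : (forall i, S (F i)) -> S (\bigcup_i F i).
Proof. by case: (smallest_sigma_algebra setT G) => _ _; apply. Qed.
Lemma sigT : S setT.
Proof. by rewrite -setC0; apply: sigC; apply: sig0. Qed.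
Lemma sigI (F : (set T)^nat) : (forall i, S (F i)) -> S (\bigcap_i F i).
Proof.
move=> h; rewrite -[X in S X]setCK setC_bigcap; apply: sigC; apply: sigU => i.
exact: sigC.
Qed.
Lemma sigU2 A B : S A -> S B -> S (A `|` B).
Proof.
move=> hA hB; have -> : A `|` B = \bigcup_i (if i == 0%N then A else B).
  apply/seteqP; split => x /=.
    by case=> h; [exists 0%N | exists 1%N].
  by case=> -[|i] _ /=; [left | right].
by apply: sigU => -[|i].
Qed.
Lemma sigI2 A B : S A -> S B -> S (A `&` B).
Proof.
move=> hA hB; rewrite -[X in S X]setCK setCI; apply: sigC; apply: sigU2; exact: sigC.
Qed.
End Sig.

Section Pr.
Variables (d0 : measure_display) (T : measurableType d0) (R : realType).
Variable P : probability T R.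

Lemma prE {A} : measurable A -> P A = (pr P A)%:E.
Proof. by move=> mA; rewrite /pr fineK // fin_num_measure. Qed.
Lemma pr_ge0 A : 0 <= pr P A.
Proof. exact/fine_ge0/measure_ge0. Qed.
Lemma pr_le A B : measurable A -> measurable B -> A `<=` B -> pr P A <= pr P B.
Proof.
move=> mA mB AB; have h := le_measure P (mem_set mA) (mem_set mB) AB.
by rewrite -lee_fin -!prE.
Qed.
Lemma pr_le1 A : measurable A -> pr P A <= 1.
Proof. by move=> mA; have := probability_le1 P mA; rewrite prE // lee_fin. Qed.
Lemma prU A B : measurable A -> measurable B -> A `&` B = set0 ->
  pr P (A `|` B) = pr P A + pr P B.
Proof.
move=> mA mB AB; have h := measureU P mA mB AB.
apply: EFin_inj; rewrite EFinD -!prE //; exact: measurableU.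
Qed.
Lemma prU2 A B : measurable A -> measurable B -> pr P (A `|` B) <= pr P A + pr P B.
Proof.
move=> mA mB; have h := measureU2 P mA mB.
rewrite -lee_fin EFinD -!prE //; exact: measurableU.
Qed.
End Pr.
Arguments prE {d0 T R} P {A}.
Arguments pr_ge0 {d0 T R} P A.
Arguments pr_le {d0 T R} P {A B}.
Arguments pr_le1 {d0 T R} P {A}.
Arguments prU {d0 T R} P {A B}.
Arguments prU2 {d0 T R} P {A B}.


Section Core.
Variables (R : realType) (dim : nat) (d0 : measure_display) (T : measurableType d0).
Variables (P : probability T R) (X : nat -> T -> 'rV[R]_dim).
Local Notation V := 'rV[R]_dim.
Local Notation Seq := (nat -> V).
Local Notation seq_sigma := (@seq_sigma R dim).
Local Notation borelV := (@borelV R dim).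
Local Notation shiftinv := (@shiftinv R dim).
Local Notation qrun := (@qrun R dim).
Local Notation Wc := (@Wc R dim).
Hypothesis hXmeas : forall j (A : set V), borelV A -> measurable (X j @^-1` A).
Hypothesis hstat : forall B, seq_sigma B -> P (ev X B) = P (ev X (shiftinv 1 B)).

Definition cyl (j : nat) (M : set V) : set Seq := [set x | M (x j)].
Definition E0 (M : set V) : set Seq := [set x | M (x 0%N)].

Lemma seq_sigma_cyl j M : borelV M -> seq_sigma (cyl j M).
Proof. by move=> hM; apply: sig_gen; exists j, M. Qed.

Lemma seq_sigma_shift1 {B} : seq_sigma B -> seq_sigma (shiftinv 1 B).
Proof.
move: B; apply: (@smallest_sub _ (sigma_algebra setT)
  [set C | exists (j : nat) (A : set V), borelV A /\ C = [set x : Seq | A (x j)]]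
  [set B | seq_sigma (shiftinv 1 B)]).
- split.
  + by rewrite /=; have -> : shiftinv 1 set0 = set0 by []; exact: sig0.
  + move=> A hA /=; have -> : shiftinv 1 (setT `\` A) = ~` shiftinv 1 A.
      by apply/seteqP; split => x /=; rewrite /shiftinv /=; [case|].
    exact: sigC hA.
  + move=> F hF /=; have -> : shiftinv 1 (\bigcup_k F k) = \bigcup_k shiftinv 1 (F k).
      by [].
    exact: sigU hF.
- move=> C [j [A [hA ->]]]; apply: sig_gen; exists j.+1, A; split => //.
Qed.

Lemma seq_sigma_shift i {B} : seq_sigma B -> seq_sigma (shiftinv i B).
Proof.
elim: i => [|i IH] hB.
  by have -> : shiftinv 0 B = B by apply/funext => x.
exact (seq_sigma_shift1 (IH hB) : seq_sigma (shiftinv i.+1 B)).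
Qed.

Lemma stat i B : seq_sigma B -> P (ev X (shiftinv i B)) = P (ev X B).
Proof.
elim: i => [|i IH] hB.
  by have -> : shiftinv 0 B = B by apply/funext => x.
rewrite -IH //; exact (esym (hstat _ (seq_sigma_shift i hB))).
Qed.

Lemma meas_ev B : seq_sigma B -> measurable (ev X B).
Proof.
move: B; apply: (@smallest_sub _ (sigma_algebra setT)
  [set C | exists (j : nat) (A : set V), borelV A /\ C = [set x : Seq | A (x j)]]
  [set B | measurable (ev X B)]).
- split.
  + exact: measurable0.
  + by move=> A hA; apply: measurableD => //; exact: measurableT.
  + by move=> F hF; exact: bigcupT_measurable.
- by move=> C [j [A [hA ->]]]; exact: hXmeas.
Qed.

Lemma shiftE i M : shiftinv i (E0 M) = cyl i M.
Proof. by apply/funext => x; rewrite /shiftinv /E0 /cyl /= addn0. Qed.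

Lemma qrunE m M : qrun m (E0 M) =
  E0 M `&` \bigcap_i (if (1 <= i <= m)%N then ~` cyl i M else setT).
Proof.
apply/seteqP; split => x [h0 h1]; split => //.
  by move=> i _; case: ifP => // hi; move: (h1 i hi); rewrite shiftE.
by move=> i hi; rewrite shiftE; move: (h1 i I); rewrite hi.
Qed.

Lemma WcE a b M : Wc a b (E0 M) =
  \bigcup_i (if (a <= i < b)%N then cyl i M else set0).
Proof.
apply/seteqP; split => x.
  by case=> i [hi h]; exists i => //; rewrite hi -shiftE.
by case=> i _; case: ifP => // hi h; exists i; rewrite shiftE.
Qed.

Lemma ss_E0 M : borelV M -> seq_sigma (E0 M).
Proof. exact: (seq_sigma_cyl 0). Qed.

Lemma ss_qrun m M : borelV M -> seq_sigma (qrun m (E0 M)).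
Proof.
move=> hM; rewrite qrunE; apply: sigI2; first exact: ss_E0.
apply: sigI => i; case: ifP => _; last exact: sigT.
by apply: sigC; apply: seq_sigma_cyl.
Qed.

Lemma ss_Wc a b M : borelV M -> seq_sigma (Wc a b (E0 M)).
Proof.
move=> hM; rewrite WcE; apply: sigU => i; case: ifP => _; last exact: sig0.
exact: seq_sigma_cyl.
Qed.

Definition g M m := pr P (ev X (qrun m (E0 M))).
Definition w M m := pr P (ev X (Wc 0 m (E0 M))).
Definition p M := pr P (ev X (E0 M)).
Definition Dq M q r := pr P (ev X (qrun q (E0 M) `&` Wc q.+1 r (E0 M))).

Lemma w0 M : w M 0 = 0.
Proof.
rewrite /w; have -> : Wc 0 0 (E0 M) = set0.
  by apply/seteqP; split => x // [i []].
by rewrite /pr /ev /=; have -> : [set w | @set0 Seq (fun j => X j w)] = set0 by [];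
   rewrite measure0.
Qed.


Lemma WcP a b M x : Wc a b (E0 M) x <-> exists i, (a <= i < b)%N /\ M (x i).
Proof.
rewrite /Wc /=; split => -[i [hi h]]; exists i; split => //.
  by move: h; rewrite shiftE.
by rewrite shiftE.
Qed.

Lemma qrunP m M x : qrun m (E0 M) x <->
  M (x 0%N) /\ forall i, (1 <= i <= m)%N -> ~ M (x i).
Proof.
rewrite /qrun /=; split => -[h0 h1]; split => // i hi; move: (h1 i hi).
  by rewrite shiftE.
by rewrite shiftE.
Qed.

Lemma mE M : borelV M -> measurable (ev X (E0 M)).
Proof. by move=> h; apply: meas_ev; apply: ss_E0. Qed.
Lemma mQ m M : borelV M -> measurable (ev X (qrun m (E0 M))).
Proof. by move=> h; apply: meas_ev; apply: ss_qrun. Qed.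
Lemma mW a b M : borelV M -> measurable (ev X (Wc a b (E0 M))).
Proof. by move=> h; apply: meas_ev; apply: ss_Wc. Qed.

Lemma evU (A B : set Seq) : ev X (A `|` B) = ev X A `|` ev X B.
Proof. by []. Qed.
Lemma evI (A B : set Seq) : ev X (A `&` B) = ev X A `&` ev X B.
Proof. by []. Qed.

Lemma wS M m : borelV M -> w M m.+1 = w M m + g M m.
Proof.
move=> hM; rewrite /w.
have -> : Wc 0 m.+1 (E0 M) = shiftinv 1 (Wc 0 m (E0 M)) `|` qrun m (E0 M).
  apply/seteqP; split => x.
    move/WcP => [[|i] [hi h]].
      have [[j [hj hx]]|hn] := pselect (exists j, (1 <= j <= m)%N /\ M (x j)).
        left; rewrite /shiftinv /=; apply/WcP; exists j.-1.
        by case: j hj hx => // j.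
      right; apply/qrunP; split => // j hj hx; apply: hn; exists j; split.
        exact: hj.
      exact: hx.
    left; rewrite /shiftinv /=; apply/WcP; exists i; split => //.
  case => [|/qrunP [h0 _]].
    by rewrite /shiftinv /= => /WcP [i [hi h]]; apply/WcP; exists i.+1.
  by apply/WcP; exists 0%N.
rewrite evU prU.
- congr (_ + _); rewrite /pr -hstat //; exact: ss_Wc.
- by apply: meas_ev; apply: seq_sigma_shift1; apply: ss_Wc.
- exact: mQ.
- apply/seteqP; split => t // [].
  rewrite /ev /shiftinv /= => /WcP [i [hi h]] /qrunP [_ h1].
  by apply: (h1 i.+1).
Qed.

Lemma w_sum M r : borelV M -> w M r = \sum_(m < r) g M m.
Proof.
move=> hM; elim: r => [|r IH]; first by rewrite big_ord0 w0.
by rewrite big_ord_recr /= wS // IH.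
Qed.

Lemma g_ge0 M m : 0 <= g M m.
Proof. exact: pr_ge0. Qed.

Lemma g_le_p M m : borelV M -> g M m <= p M.
Proof.
move=> hM; apply: pr_le; [exact: mQ|exact: mE|].
by move=> t /qrunP [].
Qed.

Lemma g_anti M m m' : borelV M -> (m <= m')%N -> g M m' <= g M m.
Proof.
move=> hM hmm; apply: pr_le; [exact: mQ|exact: mQ|].
move=> t /qrunP [h0 h1]; apply/qrunP; split => // i /andP [hi1 hi2]; apply: h1.
by rewrite hi1 (leq_trans hi2 hmm).
Qed.

Lemma g_D M q m r : borelV M -> (q <= m)%N -> (m < r)%N -> g M q <= g M m + Dq M q r.
Proof.
move=> hM hqm hmr.
have mD : measurable (ev X (qrun q (E0 M) `&` Wc q.+1 r (E0 M))).
  by rewrite evI; apply: measurableI; [exact: mQ|exact: mW].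
rewrite /Dq /g.
apply: le_trans _ (prU2 P (mQ m M hM) mD).
apply: pr_le; [exact: mQ| exact: measurableU (mQ m M hM) mD|].
move=> t ht.
have [[j [hj hx]]|hn] := pselect (exists j, (1 <= j <= m)%N /\ M (X j t)).
  right; split => //; apply/WcP; exists j; split => //.
  move: ht => /qrunP [_ h1]; case/andP: hj => hj1 hj2.
  rewrite (leq_ltn_trans hj2 hmr) andbT ltnNge; apply/negP => hjq.
  by apply: (h1 j) => //; rewrite hj1.
left; move: ht => /qrunP [h0 _]; apply/qrunP; split => // j hj hx.
by apply: hn; exists j.
Qed.

Lemma w_le M N : borelV M -> w M N <= N%:R * p M.
Proof.
move=> hM; rewrite w_sum // mulr_natl -[X in _ *+ X]card_ord -sumr_const.
by apply: ler_sum => i _; exact: g_le_p.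
Qed.

Lemma Dq_ge0 M q r : 0 <= Dq M q r.
Proof. exact: pr_ge0. Qed.

Lemma main_bound M q r : borelV M ->
  `|w M r - r%:R * g M q| <= q%:R * p M + r%:R * Dq M q r.
Proof.
move=> hM.
suff : forall j, (j <= r)%N ->
    `|w M j - j%:R * g M q| <= (minn j q)%:R * p M + j%:R * Dq M q r.
  move=> /(_ r (leqnn r)) h; apply: (le_trans h); rewrite lerD2r.
  apply: ler_wpM2r; first exact: pr_ge0.
  by rewrite ler_nat geq_minr.
elim => [|j IH] hj.
  by rewrite w0 !mul0r subr0 normr0 min0n mul0r addr0.
have IH' := IH (ltnW hj).
rewrite wS //.
have hpq := g_le_p M q hM; have hpj := g_le_p M j hM.
have g0 := g_ge0 M q; have gj0 := g_ge0 M j; have D0 := Dq_ge0 M q r.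
have hn := ler_normD (w M j - j%:R * g M q) (g M j - g M q).
have -> : w M j + g M j - j.+1%:R * g M q =
   (w M j - j%:R * g M q) + (g M j - g M q).
  by rewrite -addn1 natrD mulrDl mul1r; ring.
rewrite -addn1 natrD mulrDl mul1r.
case: (ltnP j q) => hjq.
  have -> : minn (j + 1) q = (minn j q + 1)%N.
    by rewrite addn1 !minnE; lia.
  have hs : `|g M j - g M q| <= p M.
    by rewrite ler_norml; apply/andP; split; lra.
  rewrite natrD mulrDl mul1r.
  set a := (minn j q)%:R * p M in IH' *.
  set b := j%:R * Dq M q r in IH' *.
  lra.
have -> : minn (j + 1) q = minn j q.
  by rewrite !minnE; lia.
have hs : `|g M j - g M q| <= Dq M q r.
  have := @g_D M q j r hM hjq hj; have := @g_anti M q j hM hjq.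
  rewrite ler_norml => h1 h2; apply/andP; split; lra.
set a := (minn j q)%:R * p M in IH' *.
set b := j%:R * Dq M q r in IH' *.
lra.
Qed.

Lemma mismatch B0 B1 q r : borelV B0 -> borelV B1 -> B1 `<=` B0 ->
  Dq B0 q r <= Dq B1 q r + (q + r + 1)%:R * p (B0 `&` ~` B1).
Proof.
move=> h0 h1 h10.
have hM : borelV (B0 `&` ~` B1) by apply: sigI2 => //; apply: sigC.
have mD1 : measurable (ev X (qrun q (E0 B1) `&` Wc q.+1 r (E0 B1))).
  by rewrite evI; apply: measurableI; [exact: mQ|exact: mW].
have mD0 : measurable (ev X (qrun q (E0 B0) `&` Wc q.+1 r (E0 B0))).
  by rewrite evI; apply: measurableI; [exact: mQ|exact: mW].
have mWM := mW 0 (q + r + 1) _ hM.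
apply: le_trans _ (lerD (lexx _) (w_le _ (q + r + 1) hM)).
apply: le_trans _ (prU2 P mD1 mWM).
apply: pr_le => //; first exact: measurableU.
move=> t [/qrunP [a0 a1] /WcP [i [hi ai]]].
have [[j [hj hx]]|hn] := pselect (exists j, (j < q + r + 1)%N /\ (B0 `&` ~` B1) (X j t)).
  by right; apply/WcP; exists j.
have good : forall j, (j < q + r + 1)%N -> B0 (X j t) -> B1 (X j t).
  move=> j hj hb; apply: contrapT => hb1; apply: hn; exists j; split => //.
left; split.
  apply/qrunP.
  split; first by apply: good => //; rewrite addn1.
  by move=> j hj hb; apply: (a1 j hj); apply: h10.
apply/WcP; exists i; split => //; apply: good => //.
case/andP: hi => _ hi; lia.
Qed.

End Core.
Arguments E0 {R dim}.
Arguments cyl {R dim}.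
Arguments g {R dim d0 T}.
Arguments w {R dim d0 T}.
Arguments p {R dim d0 T}.
Arguments Dq {R dim d0 T}.


Section Thr.
Variables (R : realType) (u : nat -> R -> R) (n : nat).
Hypothesis hmono : forall (s t' : R), 0 < s -> s <= t' -> u n t' <= u n s.
Hypothesis hleftc : forall (tau : R), 0 < tau -> u n x @[x --> tau^'-] --> u n tau.

Lemma archi_inv (s : R) : 0 < s -> exists k : nat, k.+1%:R^-1 < s.
Proof.
move=> hs; have [N _ hN] := near_infty_natSinv_lt (PosNum hs).
by exists N; apply: hN => /=.
Qed.

Lemma uinv_ge0 z : 0 <= uinv u n z.
Proof.
rewrite /uinv; set S := [set tau | _].
have [hS|hS] := pselect (has_sup S); last by rewrite sup_out.
case: (hS) => -[s hs] _; have [s0 _] := hs.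
apply: le_trans (ltW s0) _; exact: sup_upper_bound.
Qed.

Lemma uinv_char tau z : 0 < tau ->
  (0 < uinv u n z < tau) <-> (u n tau < z /\ exists2 s, 0 < s & z <= u n s).
Proof.
move=> htau; rewrite /uinv; set S := [set tau | _]; split.
  case/andP => h0 h1.
  have hS : has_sup S.
    apply: contrapT => hS; move: h0; by rewrite sup_out // ltxx.
  have [[s0 [hs0 hz0]] _] := hS.
  split; last by exists s0.
  rewrite ltNge; apply/negP => hz.
  have : tau <= sup S by apply: sup_upper_bound.
  by rewrite leNgt h1.
case=> hc [s0 hs0 hz0].
have ub : ubound S tau.
  move=> s [hs hzs]; rewrite leNgt; apply/negP => hts.
  have := @hmono tau s htau (ltW hts); lra.
have ne : S !=set0 by exists s0.
have hS : has_sup S by split => //; exists tau.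
apply/andP; split.
  have hsup : s0 <= sup S by apply: (sup_upper_bound hS).
  exact: lt_le_trans hs0 hsup.
have hle : sup S <= tau by apply: ge_sup.
rewrite lt_neqAle hle andbT; apply/negP => /eqP heq.
suff : z <= u n tau by lra.
have hl := @hleftc tau htau.
have := @cvgr_to_ge _ _ (at_left_proper_filter tau) _ (u n) (u n tau) z hl.
apply.
near=> x.
have hx0 : 0 < x by near: x; apply: nbhs_left_gt.
have hxt : x < tau by near: x; apply: nbhs_left_lt.
have hpos : 0 < tau - x by rewrite subr_gt0.
have [e [he1 he2] hxe] := @sup_adherent _ S (tau - x) hpos hS.
rewrite heq in hxe.
have hxe' : x < e by lra.
apply: le_trans he2 _; apply: hmono => //; exact: ltW.
Unshelve. all: by end_near.
Qed.

End Thr.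

Section Sets.
Variables (R : realType) (dim : nat).
Local Notation V := 'rV[R]_dim.
Local Notation borelV := (@borelV R dim).

Definition H0 (tau : R) : set V := [set y | 0 < `|y| < tau].
Definition B0 (c : R) : set V := [set v | c < `|v|].
Definition B1 (u : nat -> R -> R) n tau : set V :=
  [set v | u n tau < `|v| /\ 0 < `|v| /\ exists k : nat, `|v| <= u n (k.+1%:R^-1)].

Lemma open_B0 c : open (B0 c).
Proof.
by apply: (@open_comp _ _ (Num.Def.normr : V -> R) [set x | c < x]);
  [move=> x _; apply: norm_continuous | apply: open_gt].
Qed.

Lemma borel_B0 c : borelV (B0 c).
Proof. by apply: sig_gen; apply: open_B0. Qed.

Lemma borel_H0 tau : borelV (H0 tau).
Proof.
apply: sig_gen.
have -> : H0 tau = B0 0 `&` (Num.Def.normr : V -> R) @^-1` [set x | x < tau].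
  apply/seteqP; split => v; rewrite /H0 /B0 /=.
    by move=> /andP [-> ->].
  by move=> [-> ->].
apply: openI; first exact: open_B0.
by apply: (@open_comp _ _ (Num.Def.normr : V -> R) [set x | x < tau]);
  [move=> x _; apply: norm_continuous | apply: open_lt].
Qed.

Lemma borel_B1 u n tau : borelV (B1 u n tau).
Proof.
have -> : B1 u n tau = B0 (u n tau) `&` (B0 0 `&` \bigcup_k ~` B0 (u n (k.+1%:R^-1))).
  apply/seteqP; split => v /=; rewrite /B1 /B0 /=.
    by move=> [h1 [h2 [k hk]]]; do 2 split => //; exists k => //; rewrite /B0 /=; apply/negP; rewrite -leNgt.
  by move=> [h1 [h2 [k _ hk]]]; do 2 split => //; exists k; rewrite leNgt; apply/negP.
apply: sigI2; first exact: borel_B0.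
apply: sigI2; first exact: borel_B0.
apply: sigU => k; apply: sigC; exact: borel_B0.
Qed.

Lemma B1_sub u n tau : B1 u n tau `<=` B0 (u n tau).
Proof. by move=> v []. Qed.

Lemma H0_B1 (u : nat -> R -> R) n tau (v : V) :
  (forall (s t' : R), 0 < s -> s <= t' -> u n t' <= u n s) ->
  (forall (tau : R), 0 < tau -> u n x @[x --> tau^'-] --> u n tau) -> 0 < tau ->
  H0 tau (uinv u n `|v| *: (`|v|^-1 *: v)) <-> B1 u n tau v.
Proof.
move=> hmono hleftc htau; rewrite /H0 /B1 /=.
have [->|hv] := eqVneq v 0.
  rewrite normr0 invr0 !scaler0 normr0; split.
    by move=> /andP [h _]; move: h; rewrite ltxx.
  by move=> [_ [h _]]; move: h; rewrite ltxx.
have hv0 : 0 < `|v| by rewrite normr_gt0.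
rewrite !normrZ normfV normr_id mulVf ?gt_eqF // mulr1 ger0_norm; last exact: (@uinv_ge0 R u n).
rewrite (@uinv_char R u n hmono hleftc tau _ htau); split.
  move=> [h1 [s hs hz]]; split => //; split => //.
  have [k hk] := @archi_inv R _ hs; exists k.
  apply: le_trans hz (hmono _ _ _ (ltW hk)).
  by rewrite invr_gt0.
move=> [h1 [_ [k hk]]]; split => //; exists k.+1%:R^-1 => //.
Qed.

Lemma An1_eq (u : nat -> R -> R) n tau :
  (forall (s t' : R), 0 < s -> s <= t' -> u n t' <= u n s) ->
  (forall (tau : R), 0 < tau -> u n x @[x --> tau^'-] --> u n tau) -> 0 < tau ->
  An1 u n 0 (fun _ => H0 tau) = [set x : nat -> V | B1 u n tau (x 0%N)].
Proof.
move=> hmono hleftc htau; apply/seteqP; split => x /=; rewrite /An1 /=.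
  by move=> /(_ 0%N (leqnn 0)) /(@H0_B1 u n tau _ hmono hleftc htau).
move=> h j; rewrite leqn0 => /eqP ->; exact/(@H0_B1 u n tau _ hmono hleftc htau).
Qed.

End Sets.
Arguments B0 {R dim}.
Arguments B1 {R dim}.
Arguments H0 {R dim}.

Lemma borel_lt (R : realType) (dim : nat) (a : R) :
  @borelV R dim [set v : 'rV[R]_dim | `|v| < a].
Proof.
apply: sig_gen.
by apply: (@open_comp _ _ (Num.Def.normr : 'rV[R]_dim -> R) [set x | x < a]);
  [move=> x _; apply: norm_continuous | apply: open_lt].
Qed.
Arguments borel_B0 {R dim}.
Arguments borel_H0 {R dim}.
Arguments borel_B1 {R dim}.
Arguments borel_lt {R dim}.
Arguments B1_sub {R dim}.


Section Zero.
Variables (R : realType) (dim : nat) (d0 : measure_display) (T : measurableType d0).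
Variables (P : probability T R) (X : nat -> T -> 'rV[R]_dim).
Local Notation V := 'rV[R]_dim.
Local Notation borelV := (@borelV R dim).
Hypothesis hXmeas : forall j (A : set V), borelV A -> measurable (X j @^-1` A).
Local Notation p := (p P X).
Local Notation mE := (@mE R dim d0 T X hXmeas _).

Definition Zs (u : nat -> R -> R) n : set V :=
  B0 0 `&` \bigcap_k B0 (u n (k.+1%:R^-1)).

Lemma borel_Zs u n : borelV (Zs u n).
Proof. apply: sigI2; first exact: borel_B0. apply: sigI => k; exact: borel_B0. Qed.

Lemma pZs (u : nat -> R -> R) n :
  (forall (s t' : R), 0 < s -> s <= t' -> u n t' <= u n s) ->
  (forall (eps : R), 0 < eps -> exists2 a : R, 0 < a &
     exists b : R, forall tau1 tau2 : R, 0 < tau1 -> tau1 < a -> b < tau2 ->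
       ((1 - eps)%:E < P [set w | (u n tau2 < `|X 0%N w| < u n tau1)%R])%E) ->
  p (Zs u n) = 0.
Proof.
move=> hmono hr.
suff h : forall eps, 0 < eps -> p (Zs u n) <= eps.
  have h0 : 0 <= p (Zs u n) by apply: pr_ge0.
  apply/eqP; rewrite eq_le h0 andbT; apply/negP => /negP; rewrite -ltNge => hp.
  have := h _ (divr_gt0 hp (ltr0n _ 2)); lra.
move=> eps heps.
have [a ha [b hb]] := hr eps heps.
set tau1 := a / 2; set tau2 := `|b| + 1.
have ht1 : 0 < tau1 by rewrite divr_gt0.
have ht1a : tau1 < a by rewrite /tau1; lra.
have ht2 : b < tau2 by rewrite /tau2; have := ler_norm b; lra.
have hA := hb tau1 tau2 ht1 ht1a ht2.
set A := [set w | _] in hA.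
have eA : A = X 0%N @^-1` (B0 (u n tau2) `&` [set v | `|v| < u n tau1]).
  apply/seteqP; split => w; rewrite /A /B0 /=; first by case/andP.
  by case=> -> ->.
have mA : measurable A by rewrite eA; apply: hXmeas; apply: sigI2;
  [exact: borel_B0 | exact: borel_lt].
have mB := mE (borel_B0 (u n tau1)).
have [k hk] := @archi_inv R _ ht1.
have h1 : p (Zs u n) <= p (B0 (u n tau1)).
  apply: pr_le; [exact: mE (borel_Zs u n)| exact: mB|].
  move=> w [_ /(_ k I) hw]; rewrite /ev /E0 /B0 /=.
  apply: le_lt_trans hw; apply: hmono; [by rewrite invr_gt0 | exact: ltW hk].
have hdisj : ev X (E0 (B0 (u n tau1))) `&` A = set0.
  apply/seteqP; split => w // [h2]; rewrite /A /= => /andP [_ h3].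
  move: h2; rewrite /ev /E0 /B0 /=; lra.
have hU := prU P mB mA hdisj.
have hle1 : pr P (ev X (E0 (B0 (u n tau1))) `|` A) <= 1.
  by apply: pr_le1; apply: measurableU.
move: hA; rewrite (prE P mA) lte_fin => hA.
rewrite /p in h1 *; lra.
Qed.

Lemma pr_set0 : pr P set0 = 0.
Proof. by rewrite /pr measure0. Qed.

Lemma pM_ev (u : nat -> R -> R) tau : 0 < tau ->
  (forall (n : nat) (s t' : R), 0 < s -> s <= t' -> u n t' <= u n s) ->
  (forall (n : nat) (eps : R), 0 < eps -> exists2 a : R, 0 < a &
     exists b : R, forall tau1 tau2 : R, 0 < tau1 -> tau1 < a -> b < tau2 ->
       ((1 - eps)%:E < P [set w | (u n tau2 < `|X 0%N w| < u n tau1)%R])%E) ->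
  (fun n => n%:R * p (B0 (u n tau))) @ \oo --> tau ->
  \forall n \near \oo, p (B0 (u n tau) `&` ~` B1 u n tau) = 0.
Proof.
move=> htau hmono hr htail.
have key : forall n, p (B0 (u n tau) `&` ~` B1 u n tau) <= p (B0 (u n tau) `&` ~` B0 0).
  move=> n.
  have hY : borelV (B0 (u n tau) `&` ~` B0 0).
    by apply: sigI2; [exact: borel_B0| apply: sigC; exact: borel_B0].
  have hM : borelV (B0 (u n tau) `&` ~` B1 u n tau).
    by apply: sigI2; [exact: borel_B0| apply: sigC; exact: borel_B1].
  have := prU2 P (mE hY) (mE (borel_Zs u n)).
  have hz : pr P (ev X (E0 (Zs u n))) = 0 := @pZs u n (hmono n) (hr n).
  rewrite hz addr0; apply: le_trans.
  apply: pr_le; [exact: mE hM | by apply: measurableU; [exact: mE hY| exact: mE (borel_Zs u n)] |].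
  move=> w; rewrite /ev /E0 /=; move=> [h1 h2].
  have [h0|h0] := boolP (0 < `|X 0%N w|); last by left; split => //; apply/negP.
  right; split => // k _; rewrite /B0 /=; rewrite ltNge; apply/negP => hk.
  by apply: h2; split => //; split => //; exists k.
set p0 := p (~` B0 0).
have hp0 : 0 <= p0 by apply: pr_ge0.
suff hY : \forall n \near \oo, p (B0 (u n tau) `&` ~` B0 0) <= 0.
  near=> n; apply/eqP; rewrite eq_le pr_ge0 andbT.
  apply: le_trans (key n) _; near: n; exact: hY.
have [p00|p0pos] := eqVneq p0 0.
  near=> n; apply: (@le_trans _ _ p0); last by rewrite p00.
  apply: pr_le.
  - by apply: mE; apply: sigI2; [exact: borel_B0| apply: sigC; exact: borel_B0].
  - by apply: mE; apply: sigC; exact: borel_B0.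
  - by move=> w [].
have p0gt : 0 < p0 by rewrite lt_neqAle eq_sym p0pos hp0.
have ht1 : tau < tau + 1 by lra.
have h1 := cvgr_lt tau htail (tau + 1) ht1.
have h2 := cvgry_ge (@cvgr_idn R) ((tau + 1) / p0 + 1).
near=> n.
have a1 : n%:R * p (B0 (u n tau)) < tau + 1 by near: n; exact: h1.
have a2 : (tau + 1) / p0 + 1 <= n%:R by near: n; exact: h2.
have pn0 : 0 <= p (B0 (u n tau)) by apply: pr_ge0.
have e : (tau + 1) / p0 * p0 = tau + 1 by field; rewrite gt_eqF.
have hlt : p (B0 (u n tau)) < p0.
  have hN : 0 < n%:R :> R.
    have : 0 <= (tau + 1) / p0 by apply: divr_ge0; lra.
    lra.
  have a3 : (tau + 1) + p0 <= n%:R * p0.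
    have := ler_wpM2r (ltW p0gt) a2; rewrite mulrDl e mul1r; lra.
  rewrite -(ltr_pM2l hN); lra.
have [hc|hc] := leP 0 (u n tau).
  apply: (@le_trans _ _ (pr P set0)); last by rewrite pr_set0.
  apply: pr_le.
  - by apply: mE; apply: sigI2; [exact: borel_B0| apply: sigC; exact: borel_B0].
  - exact: measurable0.
  - move=> w []; rewrite /B0 /= => h3 h4; apply: h4; lra.
have : p0 <= p (B0 (u n tau)).
  apply: pr_le; [by apply: mE; apply: sigC; exact: borel_B0| exact: mE (borel_B0 _)|].
  move=> w; rewrite /ev /E0 /B0 /= => h3; rewrite ltNge in h3.
  have := normr_ge0 (X 0%N w); move/negP: h3; lra.
lra.
Unshelve. all: by end_near.
Qed.

End Zero.


Theorem corollary3p5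
  (R : realType) (dim : nat) (d0 : measure_display) (T : measurableType d0)
  (P : probability T R) (X : nat -> T -> 'rV[R]_dim)
  (u : nat -> R -> R) (k q : nat -> nat) (t : nat -> R) (theta : R)
  (* each X_j is a random vector *)
  (hXmeas : forall j (A : set 'rV[R]_dim), borelV A -> measurable (X j @^-1` A))
  (* stationarity *)
  (hstat : forall B, seq_sigma B -> P (ev X B) = P (ev X (shiftinv 1 B)))
  (* thresholds: nonincreasing, left-continuous on (0, oo) *)
  (hu_noninc : forall (n : nat) (s t' : R), 0 < s -> s <= t' -> u n t' <= u n s)
  (hu_leftc : forall (n : nat) (tau : R), 0 < tau -> u n x @[x --> tau^'-] --> u n tau)
  (hu_range : forall (n : nat) (eps : R), 0 < eps -> exists2 a : R, 0 < a &
     exists b : R, forall tau1 tau2 : R, 0 < tau1 -> tau1 < a -> b < tau2 ->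
       ((1 - eps)%:E < P [set w | (u n tau2 < `|X 0%N w| < u n tau1)%R])%E)
  (hu_tail : forall tau : R, 0 < tau ->
     (fun n => n%:R * pr P (ev X (Un u n tau))) @ \oo --> tau)
  (* sequences k_n, t_n, r_n = floor(n / k_n), q_n *)
  (hk : (fun n => (k n)%:R : R) @ \oo --> +oo)
  (ht : t @ \oo --> +oo)
  (hr : (fun n => ((n %/ k n)%N)%:R : R) @ \oo --> +oo)
  (hkt : (fun n => (k n)%:R * t n / n%:R) @ \oo --> (0 : R))
  (hq : (fun n => (q n)%:R / ((n %/ k n)%N)%:R) @ \oo --> (0 : R))
  (* extremal index *)
  (htheta : forall tau : R, 0 < tau ->
     (fun n => pr P (ev X (qrun (q n) (Un u n tau))) / pr P (ev X (Un u n tau)))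
       @ \oo --> theta)
  (* condition D'_{q_n} *)
  (hD : forall (m : nat) (H : nat -> set 'rV[R]_dim), (forall j, borelV (H j)) ->
     (fun n => n%:R * pr P (ev X (qrun (q n) (An1 u n m H)
                                  `&` Wc (q n).+1 (n %/ k n) (An1 u n m H))))
       @ \oo --> (0 : R)) :
  forall tau : R, 0 < tau ->
    (fun n => (k n)%:R * pr P (ev X (Wc 0 (n %/ k n) (Un u n tau)))) @ \oo --> theta * tau
    /\
    (fun n => pr P (ev X (Wc 0 (n %/ k n) (Un u n tau)))
              / (((n %/ k n)%N)%:R * pr P (ev X (Un u n tau)))) @ \oo --> theta.
Proof.
move=> tau htau.
pose c n := u n tau.
pose PN n := pr P (ev X (Un u n tau)).
pose GN n := pr P (ev X (qrun (q n) (Un u n tau))).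
pose WN n := pr P (ev X (Wc 0 (n %/ k n) (Un u n tau))).
pose DN n := pr P (ev X (qrun (q n) (Un u n tau) `&` Wc (q n).+1 (n %/ k n) (Un u n tau))).
pose KR n := (k n)%:R * ((n %/ k n)%N)%:R / n%:R : R.
have F1 : forall n, `|WN n - ((n %/ k n)%N)%:R * GN n| <=
    (q n)%:R * PN n + ((n %/ k n)%N)%:R * DN n :=
  fun n => @main_bound R dim d0 T P X hXmeas hstat (B0 (u n tau)) (q n) (n %/ k n)
             (borel_B0 _).
have F2 : forall n, 0 <= GN n <= PN n.
  move=> n; apply/andP; split; first exact: pr_ge0.
  exact: (@g_le_p R dim d0 T P X hXmeas (B0 (u n tau)) (q n) (borel_B0 _)).
have hmono : forall n (s t' : R), 0 < s -> s <= t' -> u n t' <= u n s := hu_noninc.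
have F5 : (fun n => n%:R * PN n) @ \oo --> tau := hu_tail tau htau.
have F6 : (fun n => GN n / PN n) @ \oo --> theta := htheta tau htau.
have ek : \forall n \near \oo, (0 < k n)%N.
  have h := cvgry_ge hk 1; near=> n; have : 1 <= (k n)%:R :> R by near: n; exact: h.
  by rewrite ler1n.
have er : \forall n \near \oo, (0 < n %/ k n)%N.
  have h := cvgry_ge hr 1; near=> n; have : 1 <= ((n %/ k n)%N)%:R :> R by near: n; exact: h.
  by rewrite ler1n.
have et : \forall n \near \oo, 1 <= t n by exact: cvgry_ge ht 1.
have en : \forall n \near \oo, (0 < n)%N by exists 1%N.
have F3 : (fun n => n%:R * DN n) @ \oo --> 0.
  have hD' := hD 0%N (fun _ => H0 tau) (fun _ => borel_H0 tau).
  have e : (fun n => n%:R * pr P (ev X (qrun (q n) (An1 u n 0 (fun _ => H0 tau))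
      `&` Wc (q n).+1 (n %/ k n) (An1 u n 0 (fun _ => H0 tau))))) =
      (fun n => n%:R * Dq P X (B1 u n tau) (q n) (n %/ k n)).
    apply/funext => n; rewrite (@An1_eq R dim u n tau (hmono n) (hu_leftc n) htau) //.
  rewrite e in hD'.
  apply: (@squeeze_cvgr _ _ _ _ (fun _ => 0) (fun n => n%:R * Dq P X (B1 u n tau) (q n) (n %/ k n))); last 2 first.
  - exact: cvg_cst.
  - exact: hD'.
  have hM := @pM_ev R dim d0 T P X hXmeas u tau htau hmono hu_range F5.
  near=> n; apply/andP; split.
    by apply: mulr_ge0; [exact: ler0n | exact: pr_ge0].
  apply: ler_wpM2l; first exact: ler0n.
  have := @mismatch R dim d0 T P X hXmeas hstat (B0 (u n tau)) (B1 u n tau) (q n) (n %/ k n)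
     (borel_B0 _) (borel_B1 _ _ _) (B1_sub _ _ _).
  have -> : p P X (B0 (u n tau) `&` ~` B1 u n tau) = 0 by near: n; exact: hM.
  by rewrite mulr0 addr0.
have F4 : (fun n => KR n) @ \oo --> (1 : R).
  apply: (@squeeze_cvgr _ _ _ _ (fun n => 1 - (k n)%:R * t n / n%:R) (fun _ => 1)); last 2 first.
  - by rewrite -[X in _ --> X]subr0; apply: cvgB; [exact: cvg_cst | exact: hkt].
  - exact: cvg_cst.
  near=> n.
  have hn : (0 < n)%N by near: n; exact: en.
  have hkn : (0 < k n)%N by near: n; exact: ek.
  have htn : 1 <= t n by near: n; exact: et.
  have N0 : 0 < n%:R :> R by rewrite ltr0n.
  have K0 : 0 < (k n)%:R :> R by rewrite ltr0n.
  have h1 : ((n %/ k n) * k n <= n)%N by exact: leq_trunc_div.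
  have h2 : (n < (n %/ k n).+1 * k n)%N by exact: ltn_ceil.
  have h1' : ((n %/ k n)%N)%:R * (k n)%:R <= n%:R :> R by rewrite -natrM ler_nat.
  have h2' : n%:R < ((n %/ k n)%N)%:R * (k n)%:R + (k n)%:R :> R.
    by rewrite -natrM -natrD ltr_nat; move: h2; rewrite mulSn addnC.
  have hkt' : (k n)%:R <= (k n)%:R * t n by rewrite ler_peMr // ltW.
  rewrite /KR; apply/andP; split.
    have -> : 1 - (k n)%:R * t n / n%:R = (n%:R - (k n)%:R * t n) / n%:R.
      by field; rewrite gt_eqF.
    apply: ler_wpM2r; first by rewrite invr_ge0 ltW.
    lra.
  by rewrite ler_pdivrMr // mul1r mulrC.
have eq1 : \forall n \near \oo,
    (k n)%:R * WN n - KR n * (n%:R * PN n) * (GN n / PN n) =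
    (k n)%:R * (WN n - ((n %/ k n)%N)%:R * GN n).
  near=> n.
  have hn : (0 < n)%N by near: n; exact: en.
  have [hp|hp] := eqVneq (PN n) 0.
    have hg : GN n = 0.
      by have := F2 n; rewrite hp => /andP [h1 h2]; apply/eqP; rewrite eq_le h1 h2.
    by rewrite hp hg !(mulr0, mul0r, subr0).
  by rewrite /KR; field; rewrite hp pnatr_eq0 -lt0n hn.
have err : \forall n \near \oo,
    `|(k n)%:R * WN n - KR n * (n%:R * PN n) * (GN n / PN n)| <=
    (q n)%:R / ((n %/ k n)%N)%:R * KR n * (n%:R * PN n) + KR n * (n%:R * DN n).
  near=> n.
  have hn : (0 < n)%N by near: n; exact: en.
  have hr0 : (0 < n %/ k n)%N by near: n; exact: er.
  have -> : (k n)%:R * WN n - KR n * (n%:R * PN n) * (GN n / PN n) =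
    (k n)%:R * (WN n - ((n %/ k n)%N)%:R * GN n) by near: n; exact: eq1.
  have -> : (q n)%:R / ((n %/ k n)%N)%:R * KR n * (n%:R * PN n) + KR n * (n%:R * DN n)
      = (k n)%:R * ((q n)%:R * PN n + ((n %/ k n)%N)%:R * DN n).
    rewrite /KR; field.
    by rewrite !pnatr_eq0 -!lt0n hn hr0.
  rewrite normrM ger0_norm ?ler0n //; apply: ler_wpM2l; first exact: ler0n.
  exact: F1.
have Fmain : KR n * (n%:R * PN n) * (GN n / PN n) @[n --> \oo] --> 1 * tau * theta.
  by apply: cvgM; [apply: cvgM|].
have Ferr : (q n)%:R / ((n %/ k n)%N)%:R * KR n * (n%:R * PN n) + KR n * (n%:R * DN n)
    @[n --> \oo] --> 0 * 1 * tau + 1 * 0.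
  by apply: cvgD; [apply: cvgM; [apply: cvgM|]|apply: cvgM].
have G1 : (fun n => (k n)%:R * WN n) @ \oo --> theta * tau.
  have -> : theta * tau = 1 * tau * theta - (0 * 1 * tau + 1 * 0) by ring.
  apply: (@squeeze_cvgr _ _ _ _
    (fun n => KR n * (n%:R * PN n) * (GN n / PN n) -
       ((q n)%:R / ((n %/ k n)%N)%:R * KR n * (n%:R * PN n) + KR n * (n%:R * DN n)))
    (fun n => KR n * (n%:R * PN n) * (GN n / PN n) +
       ((q n)%:R / ((n %/ k n)%N)%:R * KR n * (n%:R * PN n) + KR n * (n%:R * DN n)))); last 2 first.
  - exact: cvgB.
  - have -> : 1 * tau * theta - (0 * 1 * tau + 1 * 0) = 1 * tau * theta + (0 * 1 * tau + 1 * 0).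
      by ring.
    exact: cvgD.
  near=> n.
  have h := err; have e' : `|(k n)%:R * WN n - KR n * (n%:R * PN n) * (GN n / PN n)| <=
    (q n)%:R / ((n %/ k n)%N)%:R * KR n * (n%:R * PN n) + KR n * (n%:R * DN n).
    by near: n; exact: err.
  move: e'; rewrite ler_norml => /andP [e1 e2]; apply/andP; split; lra.
split; first exact: G1.
have Fden : KR n * (n%:R * PN n) @[n --> \oo] --> 1 * tau by apply: cvgM.
have hne : 1 * tau != 0 by rewrite mul1r gt_eqF.
have Fden' := cvgV hne Fden.
have G2 := cvgM G1 (Fden' _).
have -> : theta = theta * tau * (1 * tau)^-1 by field; rewrite gt_eqF.
pose G2f n := (k n)%:R * WN n * (KR n * (n%:R * PN n))^-1.
apply: (@squeeze_cvgr _ _ _ _ G2f G2f); last 2 first.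
- exact: G2.
- exact: G2.
near=> n.
suff -> : G2f n = WN n / ((n %/ k n)%:R * PN n) by rewrite lexx.
have hn : (0 < n)%N by near: n; exact: en.
have hkn : (0 < k n)%N by near: n; exact: ek.
have hr0 : (0 < n %/ k n)%N by near: n; exact: er.
rewrite /G2f /KR.
have [hp|hp] := eqVneq (PN n) 0.
  by rewrite hp !(mulr0, invr0).
field.
by rewrite hp !pnatr_eq0 -!lt0n hn hkn hr0.
Unshelve. all: by end_near.
Qed.
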